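(* If $\pi \in S_n$ then $\displaystyle \Delta_{\odot}([\pi]) = \sum_{\pi \overset{\bullet}=\pi'\pi''} [\pi']\otimes [\pi'']$ and $\epsilon_\odot([\pi]) = \begin{cases} 1 & \text{if }\ell(\pi)=0 \\ 0 & \text{if }\ell(\pi) \neq 0. \end{cases}$
   Context: Let $\Bbbk$ be a field. For a word (finite sequence of positive integers) $w=w_1\cdots w_m$ with $\max(w)\le n$, $[w,n]$ denotes the linear endomorphism of the $\Bbbk$-span of all words sending a word $v$ of length $n$ to $v_{w_1}\cdots v_{w_m}$ and other words to $0$. Define $\Delta_\odot([w,n])=\sum_{i=0}^m [w_1\cdots w_i,n]\otimes[w_{i+1}\cdots w_m,n]$ and $\epsilon_\odot([w,n])=1$ if $w=\emptyset$, else $0$, extended linearly. For $\pi\in S_n$ (generated by $s_i=(i,i+1)$), $\mathcal{R}(\pi)$ is the set of reduced words, $\ell(\pi)$ the length, and $[\pi]=\sum_{w\in\mathcal{R}(\pi)}[w,n-1]$. Write $\pi\overset{\bullet}=\pi'\pi''$ if $\pi',\pi''\in S_n$, $\pi=\pi'\pi''$ and $\ell(\pi)=\ell(\pi')+\ell(\pi'')$. *)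

(* Defs.v *)
From Stdlib Require Import ClassicalEpsilon.
From mathcomp Require Import all_boot all_fingroup all_algebra.
Set Implicit Arguments. Unset Strict Implicit. Unset Printing Implicit Defensive.
Import GRing.Theory.

(* s_i = (i, i+1) in S_n, for 1 <= i <= n-1; points of 'I_n are 0-based,
   so s_i swaps the ordinals i-1 and i.  Out-of-range letters give 1. *)
Definition adj (n i : nat) : 'S_n :=
  match @insub _ (fun x => x < n) ('I_n) i.-1, @insub _ (fun x => x < n) ('I_n) i with
  | Some a, Some b => if 0 < i then tperm a b else 1%g
  | _, _ => 1%g
  end.

Definition prodw (n : nat) (w : seq nat) : 'S_n := (\prod_(i <- w) adj n i)%g.

Fixpoint allwords (n m : nat) : seq (seq nat) :=
  match m with
  | 0 => [:: [::]]
  | m'.+1 => [seq i :: w | i <- iota 1 n.-1, w <- allwords n m']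
  end.

Definition has_word_of_len (n m : nat) (pi : 'S_n) : bool :=
  has (fun w => prodw n w == pi) (allwords n m).

Definition len (n : nat) (pi : 'S_n) : nat :=
  match excluded_middle_informative (exists m, @has_word_of_len n m pi) with
  | left H => ex_minn H
  | right _ => 0
  end.

Definition reduced_words (n : nat) (pi : 'S_n) : seq (seq nat) :=
  [seq w <- allwords n (len pi) | prodw n w == pi].

(* An element of the span of the [w,n] is represented by a finite formal
   sum, i.e. a list of (coefficient, basis element); basis element (w,n)
   stands for [w,n].  Two formal sums are equal iff all coefficients agree.
   Tensor products of spans of bases are spans of pairs of basis elements. *)
Definition lc (K : Type) (B : Type) := seq (K * B).

Definition coef (K : fieldType) (B : eqType) (s : lc K B) (b : B) : K :=
  (\sum_(p <- s | p.2 == b) p.1)%R.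

Definition symb (K : fieldType) (w : seq nat) (n : nat) : lc K (seq nat * nat) :=
  [:: (1%R, (w, n))].

Definition Delta (K : fieldType) (s : lc K (seq nat * nat))
  : lc K ((seq nat * nat) * (seq nat * nat)) :=
  flatten [seq [seq (p.1, ((take i p.2.1, p.2.2), (drop i p.2.1, p.2.2)))
               | i <- iota 0 (size p.2.1).+1] | p <- s].

Definition eps (K : fieldType) (s : lc K (seq nat * nat)) : K :=
  (\sum_(p <- s | p.2.1 == [::]) p.1)%R.

Definition tens (K : fieldType) (B : Type) (x y : lc K B) : lc K (B * B) :=
  [seq (p.1 * q.1, (p.2, q.2))%R | p <- x, q <- y].

Definition bracket (K : fieldType) (n : nat) (pi : 'S_n) : lc K (seq nat * nat) :=
  flatten [seq symb K w n.-1 | w <- reduced_words pi].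

(* Main.v *)
From Stdlib Require Import ClassicalEpsilon.
Require Import Defs.
From mathcomp Require Import all_boot all_fingroup all_algebra.
From mathcomp Require Import zify.
Set Implicit Arguments. Unset Strict Implicit. Unset Printing Implicit Defensive.

Section W.
Variable n : nat.
Definition A := fun i => i \in iota 1 n.-1.

Lemma mem_allwords m w : (w \in allwords n m) = (size w == m) && all A w.
Proof.
elim: m w => [|m IH] [|i w] //=.
  by apply/idP => /allpairsPdep [j [x [_ _ ]]].
rewrite eqSS; apply/idP/idP => [/allpairsPdep [j [x [Hj Hx [-> ->]]]]|/andP[Hs /andP[Hi Ha]]].
  by rewrite /A Hj -(IH x) Hx.
by apply/allpairsPdep; exists i, w; rewrite IH Hs Ha.
Qed.

Lemma uniq_allwords m : uniq (allwords n m).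
Proof.
elim: m => //= m IH; apply: allpairs_uniq => //; first exact: iota_uniq.
by move=> [a b] [c d] _ _ /= [-> ->].
Qed.

Lemma prodw_cat u v : prodw n (u ++ v) = (prodw n u * prodw n v)%g.
Proof. by rewrite /prodw big_cat. Qed.

Lemma has_wordP m (p : 'S_n) : reflect (exists2 w, w \in allwords n m & prodw n w = p) (@has_word_of_len n m p).
Proof. by apply: (iffP hasP) => [[w H /eqP]|[w H <-]]; exists w. Qed.

Lemma len_le m p : @has_word_of_len n m p -> @len n p <= m.
Proof.
move=> H; rewrite /len; case: excluded_middle_informative => [E|E].
  by case: ex_minnP => k _ ; apply.
by case: E; exists m.
Qed.

Lemma len_spec m p : @has_word_of_len n m p -> has_word_of_len (len p) p.
Proof.
move=> H; rewrite /len; case: excluded_middle_informative => [E|E].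
  by case: ex_minnP.
by case: E; exists m.
Qed.

Definition G (p : 'S_n) := exists w, all A w /\ prodw n w = p.

Lemma G1 : G 1%g.
Proof. by exists [::]; rewrite /prodw big_nil. Qed.

Lemma GM p q : G p -> G q -> G (p * q)%g.
Proof.
by move=> [u [Hu <-]] [v [Hv <-]]; exists (u ++ v); rewrite all_cat Hu Hv prodw_cat.
Qed.

Lemma adjE (a b : 'I_n) : val b = (val a).+1 -> adj n (val b) = tperm a b.
Proof.
move=> Hb; rewrite /adj Hb /= !insubT ?(ltn_ord a) -?Hb ?(ltn_ord b) //= => H1 H2.
by congr tperm; apply: val_inj.
Qed.

Lemma Gadj (a b : 'I_n) : val b = (val a).+1 -> G (tperm a b).
Proof.
move=> Hb; exists [:: val b]; split.
  rewrite /= andbT /A mem_iota Hb /=.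
  by case: n a b Hb => [[]//|n'] a b Hb; rewrite add1n -Hb ltn_ord.
by rewrite /prodw big_seq1 (adjE Hb).
Qed.

Lemma Gtperm_d d : forall (a b : 'I_n), val b = val a + d.+1 -> G (tperm a b).
Proof.
elim: d => [|d IH] a b Hb; first by apply: Gadj; rewrite Hb addn1.
have Hc : (val a + d.+1 < n) by rewrite (leq_ltn_trans _ (ltn_ord b)) // Hb leq_add2l.
set c := Ordinal Hc.
have -> : tperm a b = (tperm c b * tperm a c * tperm c b)%g.
  have Hb' : nat_of_ord b = nat_of_ord a + d.+2 := Hb.
  have Hca : c != a by apply/eqP => /(congr1 val) /=; lia.
  have Hba : b != a by apply/eqP => /(congr1 val) /=; lia.
  have E := tpermJ a c (tperm c b).
  by rewrite /conjg tpermV tpermL (tpermD Hca Hba) in E; rewrite mulgA in E; rewrite E.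
apply: GM; [apply: GM|]; [apply: Gadj| apply: IH |apply: Gadj] => //=; by rewrite Hb addnS.
Qed.

Lemma Gtperm (a b : 'I_n) : G (tperm a b).
Proof.
wlog H : a b / val a < val b.
  move=> W; case: (ltngtP a b) => [/W//|/W|/val_inj ->]; first by rewrite tpermC.
  by rewrite tperm1; exact: G1.
by apply: (@Gtperm_d (val b - val a).-1); rewrite prednK ?subn_gt0 // subnKC // ltnW.
Qed.

Lemma Gall p : G p.
Proof.
case: (prod_tpermP p) => ts -> _; elim: ts => [|t ts IH]; first by rewrite big_nil; exact: G1.
by rewrite big_cons; apply: GM => //; apply: Gtperm.
Qed.


Lemma mem_red w (p : 'S_n) : (w \in reduced_words p) = (w \in allwords n (len p)) && (prodw n w == p).
Proof. by rewrite mem_filter andbC. Qed.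

Lemma uniq_red (p : 'S_n) : uniq (reduced_words p).
Proof. exact/filter_uniq/uniq_allwords. Qed.

Lemma red_cat u v (pi : 'S_n) : (u ++ v \in reduced_words pi) =
  [&& u \in reduced_words (prodw n u), v \in reduced_words (prodw n v),
      (prodw n u * prodw n v == pi)%g & len pi == len (prodw n u) + len (prodw n v)].
Proof.
rewrite !mem_red !mem_allwords prodw_cat size_cat all_cat !eqxx !andbT.
apply/idP/idP.
  move=> /andP[/andP[/eqP Hs /andP[Hu Hv]] /eqP Hp].
  set p1 := prodw n u; set p2 := prodw n v.
  have h1 : has_word_of_len (size u) p1 by apply/has_wordP; exists u; rewrite // mem_allwords eqxx Hu.
  have h2 : has_word_of_len (size v) p2 by apply/has_wordP; exists v; rewrite // mem_allwords eqxx Hv.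
  have l1 := len_le h1; have l2 := len_le h2.
  have [u' Hu' Eu'] := has_wordP _ _ (len_spec h1).
  have [v' Hv' Ev'] := has_wordP _ _ (len_spec h2).
  move: Hu' Hv'; rewrite !mem_allwords => /andP[/eqP Su' Au'] /andP[/eqP Sv' Av'].
  have : has_word_of_len (len p1 + size v) pi.
    apply/has_wordP; exists (u' ++ v); last by rewrite prodw_cat Eu'.
    by rewrite mem_allwords size_cat all_cat Su' Au' Hv eqxx.
  move/len_le => m1.
  have : has_word_of_len (size u + len p2) pi.
    apply/has_wordP; exists (u ++ v'); last by rewrite prodw_cat Ev'.
    by rewrite mem_allwords size_cat all_cat Sv' Av' Hu eqxx.
  move/len_le => m2.
  have e1 : size u = len p1.
    by apply/eqP; rewrite eqn_leq l1 andbT -(leq_add2r (size v)) Hs.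
  have e2 : size v = len p2.
    by apply/eqP; rewrite eqn_leq l2 andbT -(leq_add2l (size u)) Hs.
  by rewrite Hu Hv Hp -Hs e1 e2 !eqxx.
move=> /and4P[/andP[/eqP Hu Au] /andP[/eqP Hv Av] /eqP Hp /eqP Hl].
by rewrite Au Av Hp Hl Hu Hv !eqxx.
Qed.

Lemma len0 (pi : 'S_n) : len pi = 0 -> pi = 1%g.
Proof.
move=> H; have [w [Aw Ew]] := Gall pi.
have h : has_word_of_len (size w) pi by apply/has_wordP; exists w; rewrite // mem_allwords eqxx.
have [w' Hw' <-] := has_wordP _ _ (len_spec h).
by move: Hw'; rewrite H mem_allwords; case: w' => [_|//]; rewrite /prodw big_nil.
Qed.

End W.

Import GRing.Theory.
Section C.
Variable K : fieldType.

Lemma sum_count (B : eqType) (s : lc K B) (P : pred B) :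
  all (fun p => p.1 == 1%R) s ->
  (\sum_(p <- s | P p.2) p.1)%R = ((count P (map snd s))%:R)%R.
Proof.
elim: s => [|[k x] s IH] /=; first by rewrite big_nil.
move=> /andP[/eqP -> H]; rewrite big_cons /= IH //.
by case: (P x); rewrite ?natrD ?add0n.
Qed.

Lemma coef_count (B : eqType) (s : lc K B) b : all (fun p => p.1 == 1%R) s ->
  coef s b = ((count (pred1 b) (map snd s))%:R)%R.
Proof. exact: (@sum_count B s (pred1 b)). Qed.

Lemma eps_count (s : lc K (seq nat * nat)) : all (fun p => p.1 == 1%R) s ->
  eps s = ((count (fun x => x.1 == [::]) (map snd s))%:R)%R.
Proof. exact: (@sum_count _ s (fun x => x.1 == [::])). Qed.

Lemma brk_all ws m : all (fun p => p.1 == 1%R) (flatten [seq symb K w m | w <- ws]).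
Proof. by elim: ws => //= w ws IH; rewrite eqxx IH. Qed.

Lemma brk_snd ws m : map snd (flatten [seq symb K w m | w <- ws]) = [seq (w, m) | w <- ws].
Proof. by elim: ws => //= w ws IH; rewrite IH. Qed.

Lemma Delta_cat (s1 s2 : lc K (seq nat * nat)) : Delta (s1 ++ s2) = Delta s1 ++ Delta s2.
Proof. by rewrite /Delta map_cat flatten_cat. Qed.

Lemma Delta_brk ws m : Delta (flatten [seq symb K w m | w <- ws]) =
  flatten [seq [seq (1%R, ((take i w, m), (drop i w, m))) | i <- iota 0 (size w).+1] | w <- ws].
Proof. elim: ws => [|w ws IH] //; rewrite !map_cons -cat1s !flatten_cat Delta_cat IH; congr (_ ++ _); by rewrite /Delta /= !cats0. Qed.

Lemma count_split (w u v : seq nat) (a c m : nat) :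
  count (pred1 ((u,a),(v,c))) [seq ((take i w, m), (drop i w, m)) | i <- iota 0 (size w).+1]
  = [&& w == u ++ v, a == m & c == m].
Proof.
rewrite count_map.
rewrite (@eq_in_count _ _ (fun i => (i == size u) && [&& w == u ++ v, a == m & c == m])); last first.
  move=> i; rewrite mem_iota add0n ltnS /= => Hi.
  rewrite !xpair_eqE; apply/idP/idP.
    move=> /andP[/andP[/eqP Ht /eqP Ha] /andP[/eqP Hd /eqP Hc]].
    rewrite -Ht -Hd cat_take_drop size_take_min -Ha -Hc !eqxx /=.
    by rewrite (minn_idPl Hi) eqxx.
  move=> /andP[/eqP -> /and3P[/eqP -> /eqP -> /eqP ->]].
  by rewrite take_size_cat // drop_size_cat // !eqxx.
case: ([&& _, _ & _]) / and3P => [[/eqP Hw _ _]|_].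
  rewrite (@eq_count _ _ (pred1 (size u))); last by move=> i; rewrite andbT.
  by rewrite count_uniq_mem ?iota_uniq // mem_iota add0n ltnS Hw size_cat leq_addr.
by rewrite (@eq_count _ _ pred0) ?count_pred0 // => i; rewrite andbF.
Qed.

Lemma count_pairs (ws : seq (seq nat)) (u : seq nat) (a m : nat) : uniq ws ->
  count (pred1 (u, a)) [seq (w, m) | w <- ws] = (u \in ws) && (a == m).
Proof.
move=> U; rewrite count_map.
rewrite (@eq_count _ _ (fun w => (w == u) && (a == m))); last first.
  by move=> w; rewrite /= xpair_eqE (eq_sym m).
case: (a == m); last by rewrite andbF (@eq_count _ _ pred0) ?count_pred0 // => i; rewrite andbF.
rewrite (@eq_count _ _ (pred1 u)) ?count_uniq_mem ?andbT // => i; by rewrite andbT.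
Qed.

Lemma count_tens (B : eqType) (x y : lc K B) b1 b2 :
  count (pred1 (b1, b2)) (map snd (tens x y)) =
  count (pred1 b1) (map snd x) * count (pred1 b2) (map snd y).
Proof.
elim: x => [|p x IH] //=; rewrite map_cat count_cat IH -map_comp count_map.
case: (eqVneq p.2 b1) => [E|E] /=.
  rewrite mulnDl mul1n; congr (_ + _); rewrite count_map; apply: eq_count => q /=.
  by rewrite xpair_eqE E eqxx.
rewrite add0n (@eq_count _ _ pred0) ?count_pred0 // => q /=.
by rewrite xpair_eqE (negbTE E).
Qed.

Lemma tens_all (B : eqType) (x y : lc K B) : all (fun p => p.1 == 1%R) x ->
  all (fun p => p.1 == 1%R) y -> all (fun p => p.1 == 1%R) (tens x y).
Proof.
move=> Hx Hy; apply/allP => z /allpairsP [[p q] [Hp Hq ->]] /=.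
by rewrite (eqP (allP Hx p Hp)) (eqP (allP Hy q Hq)) mul1r.
Qed.


Lemma count_flat_map (T : Type) (B : eqType) (F : T -> lc K B) (P : pred B) ps :
  count P (map snd (flatten (map F ps))) = sumn (map (fun p => count P (map snd (F p))) ps).
Proof. by elim: ps => //= p ps IH; rewrite map_cat count_cat IH. Qed.

Lemma all_flat_map (T : Type) (B : Type) (F : T -> lc K B) ps :
  (forall p, all (fun q => q.1 == 1%R) (F p)) -> all (fun q => q.1 == 1%R) (flatten (map F ps)).
Proof. by move=> H; elim: ps => //= p ps IH; rewrite all_cat H IH. Qed.

Lemma map_snd_const (T : Type) (B : Type) (g : T -> B) (s : seq T) :
  map snd [seq (1%R : K, g i) | i <- s] = map g s.
Proof. by rewrite -map_comp. Qed.

Lemma count_Delta ws (m : nat) u a v c :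
  count (pred1 ((u,a),(v,c))) (map snd (Delta (flatten [seq symb K w m | w <- ws])))
  = count (fun w => [&& w == u ++ v, a == m & c == m]) ws.
Proof.
rewrite Delta_brk count_flat_map.
under eq_map => w do rewrite map_snd_const count_split.
by rewrite sumn_count.
Qed.

End C.

Theorem corollary4p2 (K : fieldType) (n : nat) (pi : 'S_n) :
  (forall b : (seq nat * nat) * (seq nat * nat),
     coef (Delta (bracket K pi)) b =
     coef (flatten [seq tens (bracket K p.1) (bracket K p.2)
                   | p <- enum {: 'S_n * 'S_n}
                   & ((p.1 * p.2)%g == pi) && (len pi == len p.1 + len p.2)]) b)
  /\ eps (bracket K pi) = (if len pi == 0 then 1%R else 0%R).
Proof.
split.
  move=> [[u a] [v c]].
  rewrite !coef_count; first last.
  - by rewrite Delta_brk; apply: all_flat_map => w; apply/allP => z /mapP [i _ ->].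
  - by apply: all_flat_map => p; apply: tens_all; apply: brk_all.
  congr (_%:R)%R.
  rewrite /bracket count_Delta count_flat_map.
  under eq_map => p do rewrite count_tens !brk_snd !count_pairs ?uniq_red // mulnb.
  rewrite sumn_count [RHS]count_filter.
  set m := n.-1.
  have -> : count (fun w => [&& w == u ++ v, a == m & c == m]) (reduced_words pi)
         = [&& u ++ v \in reduced_words pi, a == m & c == m].
    case: (a == m); case: (c == m); rewrite ?andbF; try by rewrite (@eq_count _ _ pred0) ?count_pred0 // => w; rewrite !andbF.
    by rewrite (@eq_count _ _ (pred1 (u ++ v))) ?count_uniq_mem ?uniq_red ?andbT // => w; rewrite !andbT.
  set p0 := (prodw n u, prodw n v).
  set Q := predI _ _.
  have HQ : forall p, Q p = (p == p0) && Q p0.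
    move=> [p1 p2]; apply/idP/idP => [|/andP[/eqP -> //]].
    move=> H; suff E : (p1, p2) = p0 by rewrite -E eqxx H.
    move: H => /andP[/and3P[/andP[]]].
    by rewrite !mem_red /= => /andP[_ /eqP <-] _ /andP[_ /eqP <-].
  rewrite (eq_count HQ); case: (Q p0) / idP => HQ0.
    rewrite (@eq_count _ _ (pred1 p0)) ?count_uniq_mem ?enum_uniq ?mem_enum; last by move=> p; rewrite andbT.
    move: HQ0; rewrite /Q /= red_cat.
    by move=> /and3P[/and3P[/andP[-> ->] -> ->] -> ->].
    by [].
  rewrite (@eq_count _ _ pred0) ?count_pred0; last by move=> p; rewrite andbF.
  apply/eqP; rewrite eqb0; apply/negP => H; apply: HQ0; move: H.
  rewrite /Q /= red_cat => /and3P[/and4P[-> -> -> ->] -> ->].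
  by rewrite !andbT.
rewrite eps_count /bracket ?brk_all // brk_snd count_map.
rewrite (@eq_count _ _ (pred1 [::])) ?count_uniq_mem ?uniq_red; last by move=> w.
rewrite mem_red mem_allwords /=.
case: (eqVneq (len pi) 0) => H.
  by rewrite (len0 H) /prodw big_nil !eqxx /= mulr1n.
  by rewrite /= mulr0n.
by [].
Qed.
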